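(* Let $c,d>0$ and let $\mathcal R(c,d)=(0,c)\times(0,d)\subset\mathbb R^2$. Let $u$ be a real-valued Neumann eigenfunction of the Laplacian on $\mathcal R(c,d)$, i.e. $-\Delta u=\lambda u$ in $\mathcal R(c,d)$ for some $\lambda$, with $\frac{\partial u}{\partial \nu}=0$ on $\partial\mathcal R(c,d)$, where $\nu$ is the outward normal. If $u>0$ on $\partial\mathcal R(c,d)$, then $u$ is constant (necessarily a positive constant).
   Context: The Neumann eigenvalues of $\mathcal R(c,d)$ are $\lambda_{m,n}=\pi^2(m^2/c^2+n^2/d^2)$, $(m,n)\in\mathbb N_0^2$, with eigenfunctions $\cos(m\pi x/c)\cos(n\pi y/d)$; an eigenfunction for a (possibly degenerate) eigenvalue $\lambda$ is any nonzero real linear combination of those $\cos(m\pi x/c)\cos(n\pi y/d)$ with $\lambda_{m,n}=\lambda$. The eigenfunction is smooth up to the boundary, so its boundary values make sense. *)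

(* Defs.v *)
From Stdlib Require Import Reals Lra.
Open Scope R_scope.

Definition in_closed_rect (c d x y : R) : Prop :=
  0 <= x <= c /\ 0 <= y <= d.

Definition on_boundary (c d x y : R) : Prop :=
  in_closed_rect c d x y /\ (x = 0 \/ x = c \/ y = 0 \/ y = d).

Definition neumann_ev (c d : R) (m n : nat) : R :=
  PI ^ 2 * (INR m ^ 2 / c ^ 2 + INR n ^ 2 / d ^ 2).

Definition neumann_mode (c d : R) (m n : nat) (x y : R) : R :=
  cos (INR m * PI * x / c) * cos (INR n * PI * y / d).

Definition mode_comb (c d : R) (N : nat) (a : nat -> nat -> R) (x y : R) : R :=
  sum_f_R0 (fun m => sum_f_R0 (fun n => a m n * neumann_mode c d m n x y) N) N.

(* u is a Neumann eigenfunction of the Laplacian on R(c,d) with eigenvalue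
   lam: on the closed rectangle u equals a nonzero real linear combination of
   the modes whose eigenvalue is lam (the description given in the context). *)
Definition neumann_eigenfunction (c d lam : R) (u : R -> R -> R) : Prop :=
  exists (N : nat) (a : nat -> nat -> R),
    (forall m n, (m <= N)%nat -> (n <= N)%nat -> a m n <> 0 ->
        neumann_ev c d m n = lam) /\
    (exists m n, (m <= N)%nat /\ (n <= N)%nat /\ a m n <> 0) /\
    (forall x y, in_closed_rect c d x y -> u x y = mode_comb c d N a x y).

(* Main.v *)
Require Import Defs.
From Stdlib Require Import Reals Lra Lia Psatz Classical.
Open Scope R_scope.

Fixpoint sumk (A : nat) (f : nat -> R) : R :=
  match A with O => 0 | S A' => sumk A' f + f A' end.

Lemma sumk_ext A f g : (forall k, (k < A)%nat -> f k = g k) -> sumk A f = sumk A g.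
Proof. induction A; simpl; intros H; auto. rewrite IHA by (intros; apply H; lia).
 rewrite (H A) by lia. auto. Qed.

Lemma sumk_plus A f g : sumk A (fun k => f k + g k) = sumk A f + sumk A g.
Proof. induction A; simpl. ring. rewrite IHA; ring. Qed.

Lemma sumk_scal A a f : sumk A (fun k => a * f k) = a * sumk A f.
Proof. induction A; simpl. ring. rewrite IHA; ring. Qed.

Lemma sumk_nonneg A f : (forall k, (k<A)%nat -> 0 <= f k) -> 0 <= sumk A f.
Proof. induction A; simpl; intros H. lra.
 assert (0 <= sumk A f) by (apply IHA; intros; apply H; lia).
 assert (0 <= f A) by (apply H; lia). lra. Qed.

Lemma sumk_pos A f : (1<=A)%nat -> (forall k, (k<A)%nat -> 0 < f k) -> 0 < sumk A f.
Proof. destruct A as [|A]. lia. intros _ H; simpl.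
 assert (0 <= sumk A f) by (apply sumk_nonneg; intros; apply Rlt_le, H; lia).
 assert (0 < f A) by (apply H; lia). lra. Qed.

Lemma sumk_const A r : sumk A (fun _ => r) = INR A * r.
Proof. induction A; simpl sumk. simpl; ring. rewrite IHA, S_INR; ring. Qed.

Lemma sumk_S A f : sumk (S A) f = sumk A f + f A.
Proof. reflexivity. Qed.

Lemma sin_nPI n : sin (INR n * PI) = 0.
Proof. induction n. simpl. rewrite Rmult_0_l; apply sin_0.
 rewrite S_INR. replace ((INR n + 1) * PI) with (INR n * PI + PI) by ring.
 rewrite neg_sin, IHn; ring. Qed.

Lemma cos_nPI n : cos (INR n * PI) = (-1)^n.
Proof. induction n. simpl. rewrite Rmult_0_l; apply cos_0.
 rewrite S_INR. replace ((INR n + 1) * PI) with (INR n * PI + PI) by ring.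
 rewrite neg_cos, IHn; simpl; ring. Qed.

Lemma sumk_cos_tele A h :
  sumk A (fun k => cos (h * INR (2*k+1))) * (2 * sin h) = sin (2 * h * INR A).
Proof. induction A.
 - simpl. rewrite Rmult_0_r, sin_0; ring.
 - rewrite sumk_S, Rmult_plus_distr_r, IHA.
   replace (2*h*INR (S A)) with (h * INR (2*A+1) + h)
     by (rewrite S_INR, plus_INR, mult_INR; simpl; ring).
   replace (2*h*INR A) with (h * INR (2*A+1) - h)
     by (rewrite plus_INR, mult_INR; simpl; ring).
   rewrite sin_plus, sin_minus; ring.
Qed.

Definition Cs (A m : nat) : R :=
  sumk A (fun k => cos (INR m * PI / (2 * INR A) * INR (2*k+1))).

Lemma Cs_0 A : Cs A 0 = INR A.
Proof. unfold Cs. rewrite (sumk_ext _ _ (fun _ => 1)). rewrite sumk_const; ring.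
 intros k _. change (INR 0) with 0. replace (0 * PI / (2 * INR A) * INR (2*k+1)) with 0
   by (unfold Rdiv; ring). apply cos_0. Qed.

Lemma Cs_mid A m : (0 < m < 2*A)%nat -> Cs A m = 0.
Proof. intros Hm. unfold Cs.
 set (h := INR m * PI / (2 * INR A)).
 assert (HA : 0 < INR A) by (apply lt_0_INR; lia).
 assert (Hm0 : 0 < INR m) by (apply lt_0_INR; lia).
 assert (Hm2 : INR m < 2 * INR A).
 { assert (H2 : INR m < INR (2*A)) by (apply lt_INR; lia).
   rewrite mult_INR in H2. simpl INR in H2. lra. }
 pose proof PI_RGT_0.
 assert (Hs : 0 < sin h).
 { apply sin_gt_0. unfold h. apply Rdiv_lt_0_compat; [nra|lra].
   unfold h. apply Rmult_lt_reg_r with (2*INR A); [lra|]. unfold Rdiv. rewrite Rmult_assoc, Rinv_l by lra. nra. }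
 pose proof (sumk_cos_tele A h) as T.
 replace (2 * h * INR A) with (INR m * PI) in T by (unfold h; field; lra).
 rewrite sin_nPI in T. nra. Qed.

Lemma cos_odd_PI k : cos (PI * INR (2*k+1)) = -1.
Proof. rewrite plus_INR, mult_INR; simpl INR.
 replace (PI * ((1+1) * INR k + 1)) with (PI + 2 * INR k * PI) by ring.
 rewrite cos_period. apply cos_PI. Qed.

Lemma Cs_top A : (1 <= A)%nat -> Cs A (2*A) = - INR A.
Proof. intros HA1. unfold Cs.
 assert (HA : 0 < INR A) by (apply lt_0_INR; lia).
 rewrite (sumk_ext _ _ (fun _ => -1)). rewrite sumk_const; ring.
 intros k _. replace (INR (2*A) * PI / (2 * INR A)) with PI.
 apply cos_odd_PI. rewrite mult_INR; simpl INR. field. lra. Qed.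

Definition px (A : nat) (c : R) (k : nat) : R := INR (2*k+1) * c / (2 * INR A).

Definition Lf (al be : R) (A B : nat) (c d : R) (g : R -> R -> R) : R :=
  al * sumk A (fun k => g (px A c k) 0 + g (px A c k) d)
  + be * sumk B (fun l => g 0 (px B d l) + g c (px B d l)).

Lemma Lf_add al be A B c d f g :
  Lf al be A B c d (fun x y => f x y + g x y) = Lf al be A B c d f + Lf al be A B c d g.
Proof. unfold Lf.
 rewrite (sumk_ext A _ (fun k => (f (px A c k) 0 + f (px A c k) d) + (g (px A c k) 0 + g (px A c k) d)))
   by (intros; ring).
 rewrite (sumk_ext B _ (fun k => (f 0 (px B d k) + f c (px B d k)) + (g 0 (px B d k) + g c (px B d k))))
   by (intros; ring).
 rewrite !sumk_plus; ring. Qed.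

Lemma Lf_scal al be A B c d a f :
  Lf al be A B c d (fun x y => a * f x y) = a * Lf al be A B c d f.
Proof. unfold Lf.
 rewrite (sumk_ext A _ (fun k => a * (f (px A c k) 0 + f (px A c k) d))) by (intros; ring).
 rewrite (sumk_ext B _ (fun k => a * (f 0 (px B d k) + f c (px B d k)))) by (intros; ring).
 rewrite !sumk_scal; ring. Qed.

Lemma Lf_sum al be A B c d (F : nat -> R -> R -> R) N :
  Lf al be A B c d (fun x y => sum_f_R0 (fun i => F i x y) N)
  = sum_f_R0 (fun i => Lf al be A B c d (F i)) N.
Proof. induction N; simpl. reflexivity.
 rewrite (Lf_add al be A B c d (fun x y => sum_f_R0 (fun i => F i x y) N) (F (S N))).
 rewrite IHN. reflexivity. Qed.

Lemma px_in A c k : 0 < c -> (k < A)%nat -> 0 <= px A c k <= c.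
Proof. intros Hc Hk. unfold px.
 assert (HA : 0 < INR A) by (apply lt_0_INR; lia).
 assert (H1 : INR (2*k+1) <= INR (2*A)) by (apply le_INR; lia).
 rewrite (mult_INR 2 A) in H1. change (INR 2) with 2 in H1.
 assert (H0 : 0 <= INR (2*k+1)) by apply pos_INR.
 set (t := INR (2*k+1) * c / (2 * INR A)).
 assert (Ht : t * (2 * INR A) = INR (2*k+1) * c) by (unfold t; field; lra).
 assert (INR (2*k+1) * c <= 2 * INR A * c) by nra.
 assert (0 <= INR (2*k+1) * c) by nra.
 split.
 - destruct (Rle_or_lt 0 t); auto. nra.
 - destruct (Rle_or_lt t c); auto. nra. Qed.

Lemma Lf_ext al be A B c d f g : 0 < c -> 0 < d ->
  (forall x y, in_closed_rect c d x y -> f x y = g x y) ->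
  Lf al be A B c d f = Lf al be A B c d g.
Proof. intros Hc Hd H. unfold Lf.
 rewrite (sumk_ext A _ (fun k => g (px A c k) 0 + g (px A c k) d)).
 rewrite (sumk_ext B _ (fun k => g 0 (px B d k) + g c (px B d k))). reflexivity.
 - intros k Hk. pose proof (px_in B d k Hd Hk).
   rewrite !H; unfold in_closed_rect; auto; lra.
 - intros k Hk. pose proof (px_in A c k Hc Hk).
   rewrite !H; unfold in_closed_rect; auto; lra.
Qed.

Lemma Lf_pos al be A B c d u : 0 < c -> 0 < d -> 0 <= al -> 0 <= be ->
  ((0 < al /\ (1 <= A)%nat) \/ (0 < be /\ (1 <= B)%nat)) ->
  (forall x y, on_boundary c d x y -> 0 < u x y) ->
  0 < Lf al be A B c d u.
Proof. intros Hc Hd Ha Hb Hor Hu. unfold Lf.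
 assert (HA: forall k, (k<A)%nat -> 0 < u (px A c k) 0 + u (px A c k) d).
 { intros k Hk. pose proof (px_in A c k Hc Hk).
   assert (0 < u (px A c k) 0) by (apply Hu; split; [split; lra|auto]).
   assert (0 < u (px A c k) d) by (apply Hu; split; [split; lra|auto]). lra. }
 assert (HB: forall k, (k<B)%nat -> 0 < u 0 (px B d k) + u c (px B d k)).
 { intros k Hk. pose proof (px_in B d k Hd Hk).
   assert (0 < u 0 (px B d k)) by (apply Hu; split; [split; lra|auto]).
   assert (0 < u c (px B d k)) by (apply Hu; split; [split; lra|auto]). lra. }
 assert (0 <= sumk A (fun k => u (px A c k) 0 + u (px A c k) d))
   by (apply sumk_nonneg; intros; apply Rlt_le, HA; auto).
 assert (0 <= sumk B (fun k => u 0 (px B d k) + u c (px B d k)))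
   by (apply sumk_nonneg; intros; apply Rlt_le, HB; auto).
 destruct Hor as [[H1 H2]|[H1 H2]].
 - assert (0 < sumk A (fun k => u (px A c k) 0 + u (px A c k) d)) by (apply sumk_pos; auto). nra.
 - assert (0 < sumk B (fun k => u 0 (px B d k) + u c (px B d k))) by (apply sumk_pos; auto). nra.
Qed.

Lemma Lf_mode al be A B c d m n : 0 < c -> 0 < d ->
  Lf al be A B c d (neumann_mode c d m n)
  = al * (1 + (-1)^n) * Cs A m + be * (1 + (-1)^m) * Cs B n.
Proof. intros Hc Hd. unfold Lf, neumann_mode, Cs.
 rewrite (sumk_ext A _ (fun k => (1 + (-1)^n) * cos (INR m * PI / (2 * INR A) * INR (2*k+1)))).
 rewrite (sumk_ext B _ (fun k => (1 + (-1)^m) * cos (INR n * PI / (2 * INR B) * INR (2*k+1)))).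
 rewrite !sumk_scal; ring.
 - intros k Hk. assert (0 < INR B) by (apply lt_0_INR; lia).
   replace (INR m * PI * 0 / c) with 0 by (field; lra).
   replace (INR m * PI * c / c) with (INR m * PI) by (field; lra).
   rewrite cos_0, cos_nPI. unfold px.
   replace (INR n * PI * (INR (2 * k + 1) * d / (2 * INR B)) / d)
     with (INR n * PI / (2 * INR B) * INR (2*k+1)) by (field; lra). ring.
 - intros k Hk. assert (0 < INR A) by (apply lt_0_INR; lia).
   replace (INR n * PI * 0 / d) with 0 by (field; lra).
   replace (INR n * PI * d / d) with (INR n * PI) by (field; lra).
   rewrite cos_0, cos_nPI. unfold px.
   replace (INR m * PI * (INR (2 * k + 1) * c / (2 * INR A)) / c)
     with (INR m * PI / (2 * INR A) * INR (2*k+1)) by (field; lra). ring.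
Qed.

Lemma sum_zero f N : (forall i, (i <= N)%nat -> f i = 0) -> sum_f_R0 f N = 0.
Proof. induction N; simpl; intros H. apply H; lia.
 rewrite IHN by (intros; apply H; lia). rewrite H by lia. ring. Qed.

Lemma sum_single f N : (forall i, (1 <= i <= N)%nat -> f i = 0) -> sum_f_R0 f N = f 0%nat.
Proof. induction N; simpl; intros H. reflexivity.
 rewrite IHN by (intros; apply H; lia). rewrite (H (S N)) by lia. ring. Qed.

Lemma div_sq_pos c x : 0 < c -> 0 < x -> 0 < x / c ^ 2.
Proof. intros. apply Rdiv_lt_0_compat; [auto| nra]. Qed.

Lemma sq_lt c m m0 : 0 < c -> INR m ^ 2 / c ^ 2 < INR m0 ^ 2 / c ^ 2 -> (m < m0)%nat.
Proof. intros Hc H. apply INR_lt.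
 assert (H2 : INR m ^ 2 < INR m0 ^ 2).
 { apply Rmult_lt_reg_r with (/ c ^ 2). apply Rinv_0_lt_compat; nra. exact H. }
 pose proof (pos_INR m). pose proof (pos_INR m0). nra. Qed.

Lemma sq_eq c m m0 : 0 < c -> INR m ^ 2 / c ^ 2 = INR m0 ^ 2 / c ^ 2 -> m = m0.
Proof. intros Hc H. apply INR_eq.
 assert (H2 : INR m ^ 2 = INR m0 ^ 2).
 { apply Rmult_eq_reg_r with (/ c ^ 2). exact H. apply Rgt_not_eq, Rinv_0_lt_compat; nra. }
 pose proof (pos_INR m). pose proof (pos_INR m0). nra. Qed.

Lemma INR_pos_of_ne n : n <> 0%nat -> 1 <= INR n.
Proof. intros. apply (le_INR 1); lia. Qed.

Theorem theorem1p1 (c d lam : R) (u : R -> R -> R) :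
  0 < c -> 0 < d ->
  neumann_eigenfunction c d lam u ->
  (forall x y, on_boundary c d x y -> 0 < u x y) ->
  exists k : R, 0 < k /\ forall x y, in_closed_rect c d x y -> u x y = k.
Proof.
intros Hc Hd [N [a [Hev [[m1 [n1 [Hm1 [Hn1 Ha1]]]] Hu]]]] Hpos.
pose proof PI_RGT_0 as Hpi.
set (P := fun m n => (m <= N)%nat /\ (n <= N)%nat /\ a m n <> 0).
set (Kf := fun m n : nat => INR m ^ 2 / c ^ 2 + INR n ^ 2 / d ^ 2).
assert (HK : forall m n m' n', P m n -> P m' n' -> Kf m n = Kf m' n').
{ intros m n m' n' [H [H0 H1]] [H2 [H3 H4]].
  pose proof (Hev m n H H0 H1). pose proof (Hev m' n' H2 H3 H4). unfold neumann_ev in *. unfold Kf.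
  assert (PI^2 > 0) by nra. apply Rmult_eq_reg_l with (PI^2); lra. }
destruct (classic (forall m n, P m n -> m = 0%nat /\ n = 0%nat)) as [Hall|Hnot].
- assert (Hc0: forall x y, in_closed_rect c d x y -> u x y = a 0%nat 0%nat).
  { intros x y Hxy. rewrite (Hu x y Hxy). unfold mode_comb.
    rewrite sum_single.
    + rewrite sum_single. unfold neumann_mode. change (INR 0) with 0.
      replace (0*PI*x/c) with 0 by (unfold Rdiv; ring).
      replace (0*PI*y/d) with 0 by (unfold Rdiv; ring). rewrite cos_0; ring.
      intros i Hi. destruct (Req_dec (a 0%nat i) 0) as [E|E]. rewrite E; ring.
      exfalso. destruct (Hall 0%nat i) as [_ E2]. repeat split; auto; lia. lia.
    + intros i Hi. apply sum_zero. intros j Hj. destruct (Req_dec (a i j) 0) as [E|E]. rewrite E; ring.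
      exfalso. destruct (Hall i j) as [E2 _]. repeat split; auto; lia. lia. }
  exists (a 0%nat 0%nat). split; auto. rewrite <- (Hc0 0 0).
  + apply Hpos. split. split; lra. left; reflexivity.
  + split; lra.
- exfalso.
  assert (Hex : exists m n, P m n /\ (m <> 0 \/ n <> 0)%nat).
  { apply NNPP; intro H. apply Hnot. intros m n Hmn.
    destruct (Nat.eq_dec m 0), (Nat.eq_dec n 0); auto; exfalso; apply H; exists m, n; auto. }
  destruct Hex as [m2 [n2 [HP2 Hne2]]].
  assert (HK2 : 0 < Kf m2 n2).
  { unfold Kf. destruct Hne2 as [H|H]; pose proof (INR_pos_of_ne _ H).
    - pose proof (div_sq_pos c (INR m2 ^ 2) Hc ltac:(nra)).
      assert (0 <= INR n2 ^ 2 / d ^ 2) by (unfold Rdiv; apply Rmult_le_pos; [nra|apply Rlt_le, Rinv_0_lt_compat; nra]). lra.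
    - pose proof (div_sq_pos d (INR n2 ^ 2) Hd ltac:(nra)).
      assert (0 <= INR m2 ^ 2 / c ^ 2) by (unfold Rdiv; apply Rmult_le_pos; [nra|apply Rlt_le, Rinv_0_lt_compat; nra]). lra. }
  assert (Hnz : forall m n, P m n -> (m <> 0 \/ n <> 0)%nat).
  { intros m n HP. destruct (Nat.eq_dec m 0), (Nat.eq_dec n 0); auto. subst.
    pose proof (HK _ _ _ _ HP HP2). unfold Kf in H. change (INR 0) with 0 in H.
    exfalso. unfold Kf in HK2. assert (0 ^ 2 / c ^ 2 + 0 ^ 2 / d ^ 2 = 0) by (unfold Rdiv; ring). lra. }
  assert (Hsuff : exists al be A B, 0 <= al /\ 0 <= be /\
            ((0 < al /\ (1 <= A)%nat) \/ (0 < be /\ (1 <= B)%nat)) /\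
            forall m n, P m n -> Lf al be A B c d (neumann_mode c d m n) = 0).
  { destruct (classic (exists n0, P 0%nat n0 /\ Nat.Even n0)) as [[n0 [HPn0 Hen0]]|H1].
    2:{ exists 1, 0, (S N), 1%nat. split; [lra|]. split; [lra|]. split. left; split; [lra|lia].
        intros m n HP. rewrite Lf_mode by auto.
        destruct (Nat.eq_dec m 0) as [->|Hm0].
        - destruct (Nat.Even_or_Odd n) as [He|[k ->]].
          + exfalso. apply H1. exists n. auto.
          + replace (2*k+1)%nat with (S (2*k)) by lia. rewrite pow_1_odd. ring.
        - destruct HP as [Hm _]. rewrite (Cs_mid (S N) m) by lia. ring. }
    destruct (classic (exists m0, P m0 0%nat /\ Nat.Even m0)) as [[m0 [HPm0 Hem0]]|H2].
    2:{ exists 0, 1, 1%nat, (S N). split; [lra|]. split; [lra|]. split. right; split; [lra|lia].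
        intros m n HP. rewrite Lf_mode by auto.
        destruct (Nat.eq_dec n 0) as [->|Hn0].
        - destruct (Nat.Even_or_Odd m) as [He|[k ->]].
          + exfalso. apply H2. exists m. auto.
          + replace (2*k+1)%nat with (S (2*k)) by lia. rewrite pow_1_odd. ring.
        - destruct HP as [_ [Hn _]]. rewrite (Cs_mid (S N) n) by lia. ring. }
    destruct Hen0 as [B' HB']. destruct Hem0 as [A' HA'].
    assert (HA1 : (1 <= A')%nat).
    { destruct (Hnz _ _ HPm0); lia. }
    assert (HB1 : (1 <= B')%nat).
    { destruct (Hnz _ _ HPn0); lia. }
    exists (INR B'), (INR A'), A', B'.
    assert (0 < INR A') by (apply lt_0_INR; lia).
    assert (0 < INR B') by (apply lt_0_INR; lia).
    split; [lra|]. split; [lra|]. split. left; split; [lra|lia].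
    intros m n HP. rewrite Lf_mode by auto.
    destruct (Nat.eq_dec m 0) as [->|Hm0].
    { pose proof (HK _ _ _ _ HP HPn0) as E. unfold Kf in E.
      assert (n = n0) by (apply (sq_eq d); auto; lra). subst n n0.
      rewrite Cs_0, Cs_top, pow_1_even by lia. simpl pow. ring. }
    destruct (Nat.eq_dec n 0) as [->|Hn0].
    { pose proof (HK _ _ _ _ HP HPm0) as E. unfold Kf in E.
      assert (m = m0) by (apply (sq_eq c); auto; lra). subst m m0.
      rewrite Cs_0, Cs_top, pow_1_even by lia. simpl pow. ring. }
    pose proof (INR_pos_of_ne _ Hm0). pose proof (INR_pos_of_ne _ Hn0).
    pose proof (div_sq_pos c (INR m ^ 2) Hc ltac:(nra)).
    pose proof (div_sq_pos d (INR n ^ 2) Hd ltac:(nra)).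
    assert (m < m0)%nat.
    { pose proof (HK _ _ _ _ HP HPm0) as E. unfold Kf in E. change (INR 0) with 0 in E.
      apply (sq_lt c); auto.
      assert (0 ^ 2 / d ^ 2 = 0) by (unfold Rdiv; ring). lra. }
    assert (n < n0)%nat.
    { pose proof (HK _ _ _ _ HP HPn0) as E. unfold Kf in E. change (INR 0) with 0 in E.
      apply (sq_lt d); auto.
      assert (0 ^ 2 / c ^ 2 = 0) by (unfold Rdiv; ring). lra. }
    rewrite (Cs_mid A' m), (Cs_mid B' n) by lia. ring. }
  destruct Hsuff as [al [be [A [B [Hal [Hbe [Hor Hzero]]]]]]].
  pose proof (Lf_pos al be A B c d u Hc Hd Hal Hbe Hor Hpos) as Hp.
  rewrite (Lf_ext al be A B c d u (mode_comb c d N a) Hc Hd Hu) in Hp.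
  unfold mode_comb in Hp.
  pose proof (Lf_sum al be A B c d
     (fun m x y => sum_f_R0 (fun n => a m n * neumann_mode c d m n x y) N) N) as E.
  cbv beta in E. rewrite E in Hp. clear E.
  rewrite sum_zero in Hp. lra.
  intros m Hm.
  pose proof (Lf_sum al be A B c d
     (fun n x y => a m n * neumann_mode c d m n x y) N) as E.
  cbv beta in E. rewrite E. clear E.
  apply sum_zero. intros n Hn.
  rewrite (Lf_scal al be A B c d (a m n) (neumann_mode c d m n)).
  destruct (Req_dec (a m n) 0) as [E|E]. rewrite E; ring.
  rewrite Hzero. ring. repeat split; auto.
Qed.
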